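(* Let $\Pi=((p_1,\dots,p_n),(P_1,\dots,P_n),(d_1,\dots,d_n))$ be an $n$-pod. If $\Pi$ has a collinearity bond, then $p_1,\dots,p_n$ are collinear or $P_1,\dots,P_n$ are collinear (or both). Conversely, if $p_1,\dots,p_n$ are collinear or $P_1,\dots,P_n$ are collinear (or both), then $\Pi$ has a collinearity bond.
   Context: An $n$-pod is a triple of platform points $p_i\in\mathbb{R}^3$, base points $P_i\in\mathbb{R}^3$ and leg lengths $d_i\ge0$. Write a direct isometry as $v\mapsto Mv+y$ ($M\in SO(3)$) and put $x=-M^ty$, $r=\langle y,y\rangle$. It corresponds to $(h:M:x:y:r)=(1:m_{11}:\dots:m_{33}:x_1:x_2:x_3:y_1:y_2:y_3:r)\in\mathbb{P}^{16}_{\mathbb{C}}$. $X$ is the complex Zariski closure of all such points. Throughout, $\langle u,u'\rangle=u^tu'$ is the complex bilinear form on $\mathbb{C}^3$. Let $l_i$ be the linear form $$-d_i^2h+(\langle p_i,p_i\rangle+\langle P_i,P_i\rangle)h+r-2\langle p_i,x\rangle-2\langle y,P_i\rangle-2\langle Mp_i,P_i\rangle.$$ Define: - $K_\Pi=X\cap\{l_1=\dots=l_n=0\}$; - $B=X\cap\{h=0\}$; - the set of bonds $B_\Pi=K_\Pi\cap B$. A collinearity point is a point $(0:M:x:y:r)\in B$ with $M=0$ and exactly one of $x,y$ equal to zero. A collinearity bond is a bond which is a collinearity point. *)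

(* Defs.v *)
From mathcomp Require Import all_boot all_algebra.
From mathcomp Require Import complex.
From mathcomp Require Import reals.
From mathcomp Require Import mpoly.
Set Implicit Arguments. Unset Strict Implicit. Unset Printing Implicit Defensive.
Import GRing.Theory Num.Theory.
Local Open Scope ring_scope.

Section Pods.
Variable R : realType.
Local Notation C := (R[i]).

Definition cplx (a : R) : C := (a%:C)%C.
Definition cvec (u : 'cV[R]_3) : 'cV[C]_3 := map_mx cplx u.

Definition bil (F : pzRingType) (u u' : 'cV[F]_3) : F := (u^T *m u') 0 0.

(* A point of P^16 is represented by a nonzero vector of C^17 with
   coordinates (h : m11 m12 m13 m21 ... m33 : x1 x2 x3 : y1 y2 y3 : r),
   i.e. index 0 = h, 1+3i+j = m_{i+1,j+1}, 10+i = x_{i+1}, 13+i = y_{i+1}, 16 = r. *)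
Definition hc (v : 'I_17 -> C) : C := v (inord 0).
Definition Mc (v : 'I_17 -> C) : 'M[C]_3 := \matrix_(i < 3, j < 3) v (inord (1 + 3 * i + j)).
Definition xc (v : 'I_17 -> C) : 'cV[C]_3 := \col_(i < 3) v (inord (10 + i)).
Definition yc (v : 'I_17 -> C) : 'cV[C]_3 := \col_(i < 3) v (inord (13 + i)).
Definition rc (v : 'I_17 -> C) : C := v (inord 16).

(* v is (a representative with h = 1 of) the point (1 : M : x : y : r)
   attached to a direct isometry u |-> M u + y, M in SO(3), y in R^3,
   x = - M^t y, r = <y,y>. *)
Definition isometry_point (v : 'I_17 -> C) : Prop :=
  exists (M : 'M[R]_3) (y : 'cV[R]_3),
    M^T *m M = 1%:M /\ \det M = 1 /\
    hc v = 1 /\ Mc v = map_mx cplx M /\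
    xc v = cvec (- (M^T *m y)) /\
    yc v = cvec y /\ rc v = cplx (bil y y).

Definition homogeneous (p : {mpoly C[17]}) : Prop :=
  exists d : nat, forall m, m \in msupp p -> mdeg m = d.

(* X = complex (projective) Zariski closure of the isometry points:
   common zero locus (in P^16) of all homogeneous polynomials vanishing
   on all isometry points. *)
Definition in_X (v : 'I_17 -> C) : Prop :=
  (exists k, v k != 0) /\
  forall p : {mpoly C[17]}, homogeneous p ->
    (forall w, isometry_point w -> p.@[w] = 0) -> p.@[v] = 0.

Definition lform (p P : 'cV[R]_3) (d : R) (v : 'I_17 -> C) : C :=
  - cplx (d ^+ 2) * hc v + cplx (bil p p + bil P P) * hc v + rc v
  - 2 * bil (cvec p) (xc v) - 2 * bil (yc v) (cvec P)
  - 2 * bil (Mc v *m cvec p) (cvec P).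

Definition in_K (n : nat) (p P : 'I_n -> 'cV[R]_3) (d : 'I_n -> R) v : Prop :=
  in_X v /\ forall i, lform (p i) (P i) (d i) v = 0.

Definition in_B v : Prop := in_X v /\ hc v = 0.

Definition is_bond (n : nat) (p P : 'I_n -> 'cV[R]_3) (d : 'I_n -> R) v : Prop :=
  in_K p P d v /\ in_B v.

Definition collinearity_point v : Prop :=
  in_B v /\ Mc v = 0 /\ ((xc v == 0) != (yc v == 0)).

Definition collinearity_bond (n : nat) (p P : 'I_n -> 'cV[R]_3) (d : 'I_n -> R) v : Prop :=
  is_bond p P d v /\ collinearity_point v.

Definition collinear (n : nat) (q : 'I_n -> 'cV[R]_3) : Prop :=
  exists (a u : 'cV[R]_3), u != 0 /\ forall i, exists t : R, q i = a + t *: u.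

End Pods.

(* Main.v *)
Require Import Defs.
From mathcomp Require Import all_boot all_algebra.
From mathcomp Require Import complex.
From mathcomp Require Import reals.
From mathcomp Require Import mpoly.
From mathcomp Require Import ring lra zify.
From Stdlib Require Import FunctionalExtensionality.
Set Implicit Arguments. Unset Strict Implicit. Unset Printing Implicit Defensive.
Import GRing.Theory Num.Theory.
Local Open Scope ring_scope.
Definition pack (F : Type) (h : F) (M : 'M[F]_3) (x y : 'cV[F]_3) (r : F)
  (k : 'I_17) : F :=
  if (k : nat) == 0%N then h
  else if (k < 10)%N then M (inord ((k - 1) %/ 3)) (inord ((k - 1) %% 3))
  else if (k < 13)%N then x (inord (k - 10)) ord0
  else if (k < 16)%N then y (inord (k - 13)) ord0 else r.

Section PackLemmas.
Variable R : realType.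
Local Notation C := (R[i]).
Implicit Types (h r : C) (M : 'M[C]_3) (x y : 'cV[C]_3).

Lemma hc_pack h M x y r : hc (pack h M x y r) = h.
Proof. by rewrite /hc /pack inordK. Qed.

Lemma rc_pack h M x y r : rc (pack h M x y r) = r.
Proof. by rewrite /rc /pack inordK. Qed.

Lemma Mc_pack h M x y r : Mc (pack h M x y r) = M.
Proof.
apply/matrixP => i j; rewrite !mxE /pack inordK; last by case: i j => [i Hi] [j Hj] /=; lia.
case: i j => [i Hi] [j Hj] /=.
have E : (1 + 3 * i + j < 10)%N = true by lia. rewrite ?E {E}.
have E : ((1 + 3 * i + j - 1) %/ 3 = i)%N by lia. rewrite ?E {E}.
have E : ((1 + 3 * i + j - 1) %% 3 = j)%N by lia. rewrite ?E {E}.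
by congr (M _ _); apply: val_inj; rewrite /= inordK.
Qed.

Lemma xc_pack h M x y r : xc (pack h M x y r) = x.
Proof.
apply/matrixP => i j; rewrite [j]ord1 !mxE /pack inordK; last by case: i => [i Hi] /=; lia.
case: i => [i Hi] /=.
have E : (10 + i < 10)%N = false by lia. rewrite ?E {E}.
have E : (10 + i < 13)%N = true by lia. rewrite ?E {E}.
have E : (10 + i - 10 = i)%N by lia. rewrite ?E {E}.
by congr (x _ _); apply: val_inj; rewrite /= inordK.
Qed.

Lemma yc_pack h M x y r : yc (pack h M x y r) = y.
Proof.
apply/matrixP => i j; rewrite [j]ord1 !mxE /pack inordK; last by case: i => [i Hi] /=; lia.
case: i => [i Hi] /=.
have E : (13 + i < 10)%N = false by lia. rewrite ?E {E}.
have E : (13 + i < 13)%N = false by lia. rewrite ?E {E}.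
have E : (13 + i < 16)%N = true by lia. rewrite ?E {E}.
have E : (13 + i - 13 = i)%N by lia. rewrite ?E {E}.
by congr (y _ _); apply: val_inj; rewrite /= inordK.
Qed.
End PackLemmas.

Lemma pack_map (F G : Type) (f : F -> G) h M x y r k :
  f (pack h M x y r k) = pack (f h) (map_mx f M) (map_mx f x) (map_mx f y) (f r) k.
Proof. by rewrite /pack; repeat case: ifP => _; rewrite ?mxE. Qed.

Section Mx.
Variable F : comPzRingType.
Definition mx33 (a00 a01 a02 a10 a11 a12 a20 a21 a22 : F) : 'M[F]_3 :=
  \matrix_(i, j) match nat_of_ord i, nat_of_ord j with
   | 0, 0 => a00 | 0, 1 => a01 | 0, _ => a02
   | 1, 0 => a10 | 1, 1 => a11 | 1, _ => a12
   | _, 0 => a20 | _, 1 => a21 | _, _ => a22 end.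

Definition col3 (a b c : F) : 'cV[F]_3 :=
  \col_i match nat_of_ord i with 0 => a | 1 => b | _ => c end.

Definition Rot (q0 a b c : F) : 'M[F]_3 :=
  mx33 (q0 ^+ 2 - (a ^+ 2 + b ^+ 2 + c ^+ 2) + 2 * a ^+ 2) (2 * a * b - 2 * q0 * c) (2 * a * c + 2 * q0 * b)
       (2 * a * b + 2 * q0 * c) (q0 ^+ 2 - (a ^+ 2 + b ^+ 2 + c ^+ 2) + 2 * b ^+ 2) (2 * b * c - 2 * q0 * a)
       (2 * a * c - 2 * q0 * b) (2 * b * c + 2 * q0 * a) (q0 ^+ 2 - (a ^+ 2 + b ^+ 2 + c ^+ 2) + 2 * c ^+ 2).

Definition Nq (q0 a b c : F) := q0 ^+ 2 + a ^+ 2 + b ^+ 2 + c ^+ 2.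

Definition fam (bb : bool) (q0 a b c y1 y2 y3 : F) : 'I_17 -> F :=
  let N := Nq q0 a b c in let Rm := Rot q0 a b c in let y := col3 y1 y2 y3 in
  if bb then pack (N ^+ 2) (N *: Rm) (- (Rm^T *m y)) (N *: y) (bil y y)
  else pack (N ^+ 2) (N *: Rm^T) (N *: y) (- (Rm^T *m y)) (bil y y).

Lemma det_mx33 a00 a01 a02 a10 a11 a12 a20 a21 a22 :
  \det (mx33 a00 a01 a02 a10 a11 a12 a20 a21 a22) =
  a00 * (a11 * a22 - a12 * a21) - a01 * (a10 * a22 - a12 * a20)
  + a02 * (a10 * a21 - a11 * a20).
Proof.
rewrite (expand_det_row _ ord0) !big_ord_recr big_ord0 /= /cofactor.
rewrite !(expand_det_row _ ord0) !big_ord_recr big_ord0 /= /cofactor.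
rewrite !det_mx11 !mxE /= !big_ord0 !add0n; ring.
Qed.

Lemma bil3 a b c a' b' c' : bil (col3 a b c) (col3 a' b' c') = a * a' + b * b' + c * c'.
Proof. by rewrite /bil !mxE !big_ord_recr big_ord0 /= !mxE /= add0r. Qed.

Lemma RotTRot q0 a b c : (Rot q0 a b c)^T *m Rot q0 a b c = ((Nq q0 a b c) ^+ 2)%:M.
Proof.
apply/matrixP => i j; rewrite !mxE !big_ord_recr big_ord0 /= !mxE /=.
case: i => [[|[|[|?]]] ?]; case: j => [[|[|[|?]]] ?] //=; rewrite /Nq; ring.
Qed.

Lemma detRot q0 a b c : \det (Rot q0 a b c) = (Nq q0 a b c) ^+ 3.
Proof. rewrite /Rot det_mx33 /Nq; ring. Qed.
End Mx.

Section MxMap.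
Variables (F G : comPzRingType) (f : {rmorphism F -> G}).

Lemma map_mx33 a00 a01 a02 a10 a11 a12 a20 a21 a22 :
  map_mx f (mx33 a00 a01 a02 a10 a11 a12 a20 a21 a22) =
  mx33 (f a00) (f a01) (f a02) (f a10) (f a11) (f a12) (f a20) (f a21) (f a22).
Proof.
apply/matrixP => i j; rewrite !mxE.
by case: i => [[|[|[|?]]] ?]; case: j => [[|[|[|?]]] ?].
Qed.

Lemma map_col3 a b c : map_mx f (col3 a b c) = col3 (f a) (f b) (f c).
Proof. by apply/matrixP => i j; rewrite !mxE; case: i => [[|[|[|?]]] ?]. Qed.

Lemma map_Rot q0 a b c : map_mx f (Rot q0 a b c) = Rot (f q0) (f a) (f b) (f c).
Proof. by rewrite /Rot map_mx33; congr mx33; rewrite !(rmorphD, rmorphB, rmorphN, rmorphM, rmorphXn, rmorph_nat, rmorph1); ring. Qed.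

Lemma map_Nq q0 a b c : f (Nq q0 a b c) = Nq (f q0) (f a) (f b) (f c).
Proof. by rewrite /Nq !(rmorphD, rmorphXn). Qed.

Lemma map_bil (u u' : 'cV[F]_3) : f (bil u u') = bil (map_mx f u) (map_mx f u').
Proof. by rewrite /bil matrix.map_trmx -map_mxM [RHS]mxE. Qed.

Lemma fam_map bb q0 a b c y1 y2 y3 k :
  f (fam bb q0 a b c y1 y2 y3 k) = fam bb (f q0) (f a) (f b) (f c) (f y1) (f y2) (f y3) k.
Proof.
rewrite /fam; case: bb; rewrite (pack_map f) map_bil !map_mxZ ?map_mxN ?map_mxM -?matrix.map_trmx
  ?map_Rot ?map_col3 rmorphXn map_Nq //.
Qed.
End MxMap.

Section Ext.
Variable K : numFieldType.

Definition ispoly (f : K -> K) := exists q : {poly K}, forall w, f w = q.[w].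

Lemma ispoly_ext f g : (forall w, f w = g w) -> ispoly g -> ispoly f.
Proof. by move=> E [q Hq]; exists q => w; rewrite E Hq. Qed.

Lemma ispoly_cst c : ispoly (fun _ => c).
Proof. by exists c%:P => w; rewrite hornerC. Qed.

Lemma ispoly_id : ispoly (fun w => w).
Proof. by exists 'X => w; rewrite hornerX. Qed.

Lemma ispolyD f g : ispoly f -> ispoly g -> ispoly (fun w => f w + g w).
Proof. by move=> [p Hp] [q Hq]; exists (p + q) => w; rewrite hornerD Hp Hq. Qed.

Lemma ispolyM f g : ispoly f -> ispoly g -> ispoly (fun w => f w * g w).
Proof. by move=> [p Hp] [q Hq]; exists (p * q) => w; rewrite hornerM Hp Hq. Qed.

Lemma ispolyX f k : ispoly f -> ispoly (fun w => f w ^+ k).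
Proof. by move=> [p Hp]; exists (p ^+ k) => w; rewrite horner_exp Hp. Qed.

Lemma ispoly_sum (T : Type) (s : seq T) (F : T -> K -> K) :
  (forall t, ispoly (F t)) -> ispoly (fun w => \sum_(t <- s) F t w).
Proof.
move=> H; elim: s => [|t s IH].
  by apply: ispoly_ext (ispoly_cst 0) => w; rewrite big_nil.
by apply: ispoly_ext (ispolyD (H t) IH) => w; rewrite big_cons.
Qed.

Lemma ispoly_prod (n : nat) (F : 'I_n -> K -> K) :
  (forall t, ispoly (F t)) -> ispoly (fun w => \prod_(t < n) F t w).
Proof.
move=> H; rewrite /ispoly.
have : ispoly (fun w => \prod_(t <- enum 'I_n) F t w).
  elim: (enum 'I_n) => [|t s IH].
    by apply: ispoly_ext (ispoly_cst 1) => w; rewrite big_nil.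
  by apply: ispoly_ext (ispolyM (H t) IH) => w; rewrite big_cons.
by case=> q Hq; exists q => w; rewrite -Hq big_enum.
Qed.

Lemma ispoly_meval (n : nat) (P : {mpoly K[n]}) (Fw : K -> 'I_n -> K) :
  (forall i, ispoly (fun w => Fw w i)) -> ispoly (fun w => P.@[Fw w]).
Proof.
move=> H; apply: ispoly_ext (fun w => mevalE (Fw w) P) _.
apply: ispoly_sum => m; apply: ispolyM; first exact: ispoly_cst.
by apply: ispoly_prod => i; apply: ispolyX.
Qed.

Lemma nat_roots f : ispoly f -> (forall m, f m.+1%:R = 0) -> forall w, f w = 0.
Proof.
case=> q Hq H w; rewrite Hq.
suff -> : q = 0 by rewrite horner0.
apply: (@roots_geq_poly_eq0 _ q [seq (m.+1)%:R | m <- iota 0 (size q)]).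
- by apply/allP => x /mapP [m _ ->]; rewrite /root -Hq H.
- rewrite map_inj_uniq ?iota_uniq // => a b /eqP; rewrite eqr_nat => /eqP [] //.
- by rewrite size_map size_iota.
Qed.

Definition setv n (z : 'I_n -> K) (j : 'I_n) (w : K) : 'I_n -> K :=
  fun i => if i == j then w else z i.

Lemma ext_poly n (f : ('I_n -> K) -> K) :
  (forall z j, ispoly (fun w => f (setv z j w))) ->
  (forall z, (forall i, exists m, z i = m.+1%:R) -> f z = 0) ->
  forall z, f z = 0.
Proof.
move=> Hp H0.
have key : forall m z, (forall i : 'I_n, (m <= i)%N -> exists mm, z i = mm.+1%:R) -> f z = 0.
  elim=> [|m IH] z Hz; first by apply: H0 => i; exact: Hz.
  case: (ltnP m n) => hm.
    pose j := Ordinal hm.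
    have g0 : forall w, f (setv z j w) = 0.
      apply: nat_roots (Hp z j) _ => mm; apply: IH => i hi; rewrite /setv.
      case: eqP => [_|ne]; first by exists mm.
      apply: Hz; have : (i : nat) != m by apply/eqP => e; apply: ne; apply: val_inj.
      lia.
    have -> : z = setv z j (z j).
      by apply: functional_extensionality => i; rewrite /setv; case: eqP => // ->.
    exact: g0.
  apply: IH => i hi; have := ltn_ord i; lia.
move=> z; apply: (key n) => i hi; have := ltn_ord i; lia.
Qed.
End Ext.

Lemma meval_homog (K : comNzRingType) n (p : {mpoly K[n]}) d :
  (forall m, m \in msupp p -> mdeg m = d) ->
  forall (c : K) (v : 'I_n -> K), p.@[fun i => c * v i] = c ^+ d * p.@[v].
Proof.
move=> Hd c v; rewrite !mevalE big_distrr; apply: eq_big_seq => m /Hd <-.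
rewrite (eq_bigr (fun i => c ^+ m i * v i ^+ m i)); last by move=> i _; rewrite exprMn.
rewrite big_split /= mdegE.
rewrite -(big_morph (fun k => c ^+ k) (fun a b => exprD c a b) (expr0 c)).
by rewrite mulrCA.
Qed.

Lemma trmxZ' (F : pzRingType) m n (a : F) (A : 'M[F]_(m, n)) : (a *: A)^T = a *: A^T.
Proof. by apply/matrixP => i j; rewrite !mxE. Qed.

Lemma bilZ (F : comPzRingType) (a b : F) (u v : 'cV[F]_3) : bil (a *: u) (b *: v) = a * b * bil u v.
Proof. by rewrite /bil trmxZ' -scalemxAl -scalemxAr scalerA !mxE. Qed.

Lemma pack_scale (F : pzRingType) (c : F) h A x y r k :
  c * pack h A x y r k = pack (c * h) (c *: A) (c *: x) (c *: y) (c * r) k.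
Proof. by rewrite /pack; repeat case: ifP => _; rewrite ?mxE. Qed.

Section RealPts.
Variable R : realType.
Local Notation C := (R[i]).

Lemma so3_real (q0 a b c : R) : Nq q0 a b c != 0 ->
  ((Nq q0 a b c)^-1 *: Rot q0 a b c)^T *m ((Nq q0 a b c)^-1 *: Rot q0 a b c) = 1%:M /\
  \det ((Nq q0 a b c)^-1 *: Rot q0 a b c) = 1.
Proof.
move=> nz; split.
  rewrite trmxZ' -scalemxAl -scalemxAr scalerA RotTRot scale_scalar_mx.
  by congr (_%:M); field.
by rewrite detZ detRot; field.
Qed.

Lemma iso_pack (M : 'M[R]_3) (t : 'cV[R]_3) : M^T *m M = 1%:M -> \det M = 1 ->
  isometry_point (pack 1 (map_mx (@cplx R) M) (cvec (- (M^T *m t))) (cvec t) (@cplx R (bil t t))).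
Proof.
move=> h1 h2; exists M, t; do !split => //.
- exact: hc_pack.
- exact: Mc_pack.
- exact: xc_pack.
- exact: yc_pack.
- exact: rc_pack.
Qed.

Lemma fam_real bb (q0 a b c y1 y2 y3 : R) : Nq q0 a b c != 0 ->
  exists M t, [/\ M^T *m M = 1%:M, \det M = 1 &
  forall k, fam bb q0 a b c y1 y2 y3 k =
     (Nq q0 a b c) ^+ 2 * pack 1 M (- (M^T *m t)) t (bil t t) k].
Proof.
move=> nz; set N := Nq q0 a b c; set Rm := Rot q0 a b c; set y := col3 y1 y2 y3.
have [o1 d1] := so3_real nz.
have o2 : (N^-1 *: Rm) *m (N^-1 *: Rm)^T = 1%:M by apply: mulmx1C.
case: bb.
  exists (N^-1 *: Rm), (N^-1 *: y); split => // k.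
  rewrite pack_scale /fam -/N -/Rm -/y; congr pack.
  - by rewrite mulr1.
  - by rewrite scalerA; congr (_ *: _); field.
  - rewrite trmxZ' -scalemxAl -scalemxAr !scalerN !scalerA; congr (- _).
    by rewrite -[LHS]scale1r; congr (_ *: _); field.
  - by rewrite scalerA; congr (_ *: _); field.
  - by rewrite bilZ; field.
exists (N^-1 *: Rm)^T, (- ((N^-1 *: Rm)^T *m (N^-1 *: y))); split => //.
- by rewrite trmxK.
- by rewrite det_tr.
move=> k; rewrite pack_scale /fam -/N -/Rm -/y; congr pack.
- by rewrite mulr1.
- by apply/matrixP => i j; rewrite !mxE [RHS]mulrA; congr (_ * _); field.
- by rewrite trmxK mulmxN opprK mulmxA o2 mul1mx scalerA; congr (_ *: _); field.
- apply/matrixP => i j; rewrite !mxE !big_ord_recr !big_ord0 /= !mxE.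
  by case: i => [[|[|[|?]]] ?] /=; field.
- rewrite /bil !mxE !big_ord_recr !big_ord0 /= !mxE !big_ord_recr !big_ord0 /= !mxE.
  rewrite /= /N /Nq; field; exact: nz.
Qed.
End RealPts.

Section CPts.
Variable R : realType.
Local Notation C := (R[i]).

Definition homog_van (p : {mpoly C[17]}) d :=
  (forall m, m \in msupp p -> mdeg m = d) /\
  (forall w, isometry_point w -> p.@[w] = 0).

Lemma fam_nat_zero p d bb (m0 m1 m2 m3 m4 m5 m6 : nat) : homog_van p d ->
  p.@[fam bb (m0.+1%:R : C) m1.+1%:R m2.+1%:R m3.+1%:R m4.+1%:R m5.+1%:R m6.+1%:R] = 0.
Proof.
case=> Hd Hv.
have nz : Nq (m0.+1%:R : R) m1.+1%:R m2.+1%:R m3.+1%:R != 0.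
  by rewrite /Nq; apply: lt0r_neq0; rewrite !addr_gt0 // exprn_gt0 // ltr0Sn.
have [M [t [o dM Heq]]] := fam_real bb m4.+1%:R m5.+1%:R m6.+1%:R nz.
set c := real_complex R (Nq (m0.+1%:R : R) m1.+1%:R m2.+1%:R m3.+1%:R ^+ 2).
set w := pack 1 (map_mx (@cplx R) M) (cvec (- (M^T *m t))) (cvec t) (@cplx R (bil t t)).
have E : forall k, fam bb (m0.+1%:R : C) m1.+1%:R m2.+1%:R m3.+1%:R m4.+1%:R m5.+1%:R m6.+1%:R k
   = c * w k.
  move=> k; rewrite -!(rmorph_nat (real_complex R)) -(fam_map (real_complex R)) Heq rmorphM.
  congr (_ * _); rewrite /w /pack.
  by repeat case: ifP => _; rewrite ?mxE.
rewrite (meval_eq _ E) (meval_homog Hd) Hv ?mulr0 //.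
exact: iso_pack.
Qed.
End CPts.

Lemma col3E (F : comPzRingType) (u : 'cV[F]_3) : u = col3 (u 0 0) (u 1 0) (u 2 0).
Proof. by apply/matrixP => i j; rewrite [j]ord1 !mxE; case: i => [[|[|[|?]]] ?] //=;
  congr (u _ _); apply: val_inj. Qed.

Lemma bilE (F : comPzRingType) (u v : 'cV[F]_3) :
  bil u v = u 0 0 * v 0 0 + u 1 0 * v 1 0 + u 2 0 * v 2 0.
Proof.
rewrite /bil mxE !big_ord_recr big_ord0 /= !mxE add0r.
by congr (_ * _ + _ * _ + _ * _); congr (_ _ _); apply: val_inj.
Qed.

Lemma RotT0 (F : comPzRingType) (a b c y1 y2 y3 : F) :
  (Rot 0 a b c)^T *m col3 y1 y2 y3 =
  (2 * (a * y1 + b * y2 + c * y3)) *: col3 a b c - (a ^+ 2 + b ^+ 2 + c ^+ 2) *: col3 y1 y2 y3.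
Proof.
apply/matrixP => i j; rewrite !mxE !big_ord_recr !big_ord0 /= !mxE.
by case: i => [[|[|[|?]]] ?] /=; ring.
Qed.

Lemma fam_zero (F : comPzRingType) bb (x y : 'cV[F]_3) : bil x x = 0 -> forall k,
  fam bb 0 (x 0 0) (x 1 0) (x 2 0) (y 0 0) (y 1 0) (y 2 0) k =
  if bb then pack 0 0 (- (2 * bil x y) *: x) 0 (bil y y) k
  else pack 0 0 0 (- (2 * bil x y) *: x) (bil y y) k.
Proof.
move=> hx k.
have hN : Nq 0 (x 0 0) (x 1 0) (x 2 0) = 0.
  rewrite (col3E x) bil3 in hx; by rewrite -[RHS]hx /Nq; ring.
have hR : (Rot 0 (x 0 0) (x 1 0) (x 2 0))^T *m col3 (y 0 0) (y 1 0) (y 2 0) =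
   (2 * bil x y) *: x.
  rewrite RotT0 (_ : x 0 0 ^+ 2 + x 1 0 ^+ 2 + x 2 0 ^+ 2 = 0) ?scale0r ?subr0.
    by rewrite [in RHS](col3E x) [in RHS](col3E y) bil3.
  by rewrite -[RHS]hN /Nq; ring.
rewrite /fam hN hR -(col3E y) !scale0r expr0n /= scaleNr.
by case: bb.
Qed.

Section Target.
Variable R : realType.
Local Notation C := (R[i]).
Local Notation o k := (@Ordinal 7 k isT).

Definition conjv (x : 'cV[C]_3) : 'cV[C]_3 := map_mx (@conjc R) x.

Lemma inX_target (x : 'cV[C]_3) (r : C) (bb : bool) :
  bil x x = 0 -> bil x (conjv x) != 0 ->
  in_X (if bb then pack 0 0 x 0 r else pack 0 0 0 x r).
Proof.
move=> hx hs; split.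
  have [i xi] : exists i, x i 0 != 0.
    case: (pickP (fun i => x i 0 != 0)) => [i hi|H]; first by exists i.
    have x0 : x = 0.
      by apply/matrixP => i j; rewrite [j]ord1 mxE; apply/eqP; move: (H i) => /negbFE.
    by move: hs; rewrite x0 /bil !mxE big1 ?eqxx // => k _; rewrite !mxE mul0r.
  case: bb.
    exists (inord (10 + i)); have := xc_pack 0 0 x 0 r.
    by move/matrixP => /(_ i 0); rewrite mxE => ->.
  exists (inord (13 + i)); have := yc_pack 0 0 0 x r.
  by move/matrixP => /(_ i 0); rewrite mxE => ->.
move=> p [d Hd] Hv.
have hv : homog_van p d by [].
pose famX k : {mpoly C[7]} := fam bb 'X_(o 0) 'X_(o 1) 'X_(o 2) 'X_(o 3) 'X_(o 4) 'X_(o 5) 'X_(o 6) k.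
pose f (z : 'I_7 -> C) := p.@[fam bb (z (o 0)) (z (o 1)) (z (o 2)) (z (o 3)) (z (o 4)) (z (o 5)) (z (o 6))].
have famXE : forall z k, (famX k).@[z] = fam bb (z (o 0)) (z (o 1)) (z (o 2)) (z (o 3)) (z (o 4)) (z (o 5)) (z (o 6)) k.
  move=> z k; rewrite /famX (fam_map (meval z)) /= !mevalXU; reflexivity.
have f0 : forall z, f z = 0.
  apply: ext_poly.
    move=> z j.
    apply: (@ispoly_ext _ _ (fun w => p.@[fun k => (famX k).@[setv z j w]])).
      by move=> w; rewrite /f; apply: meval_eq => k; rewrite famXE.
    apply: ispoly_meval => k; apply: ispoly_meval => i; rewrite /setv.
    by case: (i == j); [apply: ispoly_id | apply: ispoly_cst].
  move=> z Hz; rewrite /f.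
  have [m0 ->] := Hz (o 0); have [m1 ->] := Hz (o 1); have [m2 ->] := Hz (o 2).
  have [m3 ->] := Hz (o 3); have [m4 ->] := Hz (o 4); have [m5 ->] := Hz (o 5).
  have [m6 ->] := Hz (o 6).
  apply: (@fam_nat_zero R p d); exact: hv.
set y := conjv x - r *: x.
pose zs (i : 'I_7) : C := match nat_of_ord i with
  | 0 => 0 | 1 => x 0 0 | 2 => x 1 0 | 3 => x 2 0 | 4 => y 0 0 | 5 => y 1 0 | _ => y 2 0 end.
have := f0 zs; rewrite /f /zs /=; clear f0 famXE f famX zs.
set s := bil x (conjv x).
have hxy : bil x y = s.
  rewrite /y /s !bilE !mxE /=.
  rewrite bilE in hx.
  have e : forall A B T : C, A = B - r * T -> T = 0 -> A = B by move=> A B T -> ->; ring.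
  by apply: (e _ _ _ _ hx); ring.
have hcc : bil (conjv x) (conjv x) = 0.
  by rewrite /conjv -(map_bil (@conjc R)) hx rmorph0.
have hyy : bil y y = - (2 * s) * r.
  rewrite /y /s !bilE !mxE /=.
  rewrite bilE in hx; rewrite bilE in hcc.
  have e : forall A B T1 T2 : C, A = B + r ^+ 2 * T1 + T2 -> T1 = 0 -> T2 = 0 -> A = B.
    by move=> A B T1 T2 -> -> ->; ring.
  move: hcc; rewrite !mxE => hcc.
  by apply: (e _ _ _ _ _ hx hcc); ring.
rewrite (meval_eq _ (fam_zero bb y hx)) hxy hyy.
set k0 := - (2 * s).
have ek : forall k, (if bb then pack 0 0 (k0 *: x) 0 (k0 * r) k else pack 0 0 0 (k0 *: x) (k0 * r) k)
   = k0 * (if bb then pack 0 0 x 0 r k else pack 0 0 0 x r k).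
  by move=> k; case: bb; rewrite pack_scale mulr0 !scaler0.
rewrite (meval_eq _ ek) (meval_homog Hd) => /eqP; rewrite mulf_eq0 expf_eq0 => /orP [/andP [_]|/eqP //].
  by rewrite /k0 oppr_eq0 mulf_eq0 pnatr_eq0 (negbTE hs).
by move=> H; rewrite -[RHS]H; destruct bb.
Qed.
End Target.

Lemma bilC (F : comPzRingType) (u v : 'cV[F]_3) : bil u v = bil v u.
Proof. by rewrite !bilE; ring. Qed.

Lemma bil0l (F : comPzRingType) (u : 'cV[F]_3) : bil 0 u = 0.
Proof. by rewrite bilE !mxE !mul0r !addr0. Qed.

Section Final.
Variable R : realType.
Local Notation C := (R[i]).

Definition qpoly (off : nat) : {mpoly C[17]} :=
  \sum_(i < 3) 'X_(inord (off + i)) ^+ 2 - 'X_(inord 0) * 'X_(inord 16).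

Lemma qpoly_homog off m : m \in msupp (qpoly off) -> mdeg m = 2%N.
Proof.
have X1 : forall i : 'I_17, ('X_i : {mpoly C[17]}) \is [in C[17], 1.-homog].
  by move=> i; rewrite dhomogX; apply/eqP; apply: mdeg1.
have H : qpoly off \is [in C[17], 2.-homog].
  rewrite /qpoly rpredB //; first by apply: rpred_sum => i _; exact: (dhomogMn 2 (X1 _)).
  exact: (dhomogM (X1 _) (X1 _)).
exact: (dhomog_mf H).
Qed.

Lemma qpoly_eval off (v : 'I_17 -> C) :
  (qpoly off).@[v] = \sum_(i < 3) v (inord (off + i)) ^+ 2 - v (inord 0) * v (inord 16).
Proof.
rewrite /qpoly mevalB mevalM !mevalXU raddf_sum /=; congr (_ - _).
by apply: eq_bigr => i _; rewrite rmorphXn /= mevalXU.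
Qed.

Lemma sumx_bil (v : 'I_17 -> C) : \sum_(i < 3) v (inord (10 + i)) ^+ 2 = bil (xc v) (xc v).
Proof. by rewrite /bil mxE; apply: eq_bigr => i _; rewrite !mxE expr2. Qed.

Lemma sumy_bil (v : 'I_17 -> C) : \sum_(i < 3) v (inord (13 + i)) ^+ 2 = bil (yc v) (yc v).
Proof. by rewrite /bil mxE; apply: eq_bigr => i _; rewrite !mxE expr2. Qed.

Lemma cvec_bil (u u' : 'cV[R]_3) : bil (cvec u) (cvec u') = cplx (bil u u').
Proof. by rewrite /cvec /cplx -(map_bil (real_complex R)). Qed.

Lemma iso_isotropic (w : 'I_17 -> C) : isometry_point w ->
  bil (xc w) (xc w) = hc w * rc w /\ bil (yc w) (yc w) = hc w * rc w.
Proof.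
case=> M [y [o [_ [-> [_ [-> [-> ->]]]]]]]; rewrite mul1r !cvec_bil; split => //.
have o2 : M *m M^T = 1%:M by apply: mulmx1C.
congr cplx; rewrite (_ : forall u : 'cV[R]_3, bil (- u) (- u) = bil u u); last first.
  by move=> u; rewrite !bilE !mxE; ring.
by rewrite /bil trmx_mul trmxK mulmxA -(mulmxA _ M) o2 mulmx1.
Qed.

Lemma inX_isotropic (v : 'I_17 -> C) : in_X v ->
  bil (xc v) (xc v) = hc v * rc v /\ bil (yc v) (yc v) = hc v * rc v.
Proof.
case=> _ H.
have q0 : forall off, (off = 10 \/ off = 13)%N -> (qpoly off).@[v] = 0.
  move=> off hoff; apply: H.
    by exists 2%N => m; apply: qpoly_homog.
  move=> w /iso_isotropic [hx hy]; rewrite qpoly_eval.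
  by case: hoff => ->; [rewrite sumx_bil hx | rewrite sumy_bil hy]; rewrite subrr.
split; apply/eqP; rewrite -subr_eq0.
  by rewrite -sumx_bil -qpoly_eval q0 //; left.
by rewrite -sumy_bil -qpoly_eval q0 //; right.
Qed.
End Final.

Section Cplx.
Variable R : realType.
Local Notation C := (R[i]).
Local Open Scope complex_scope.

Lemma cmulE (a b c d : R) : ((a +i* b) * (c +i* d) : C) = ((a * c - b * d) +i* (a * d + b * c)).
Proof. by []. Qed.
Lemma caddE (a b c d : R) : ((a +i* b) + (c +i* d) : C) = ((a + c) +i* (b + d)).
Proof. by []. Qed.
Lemma cE (z : C) : z = (@complex.Re R z +i* @complex.Im R z).
Proof. by case: z. Qed.
Lemma cvecE (u : 'cV[R]_3) k : cvec u k 0 = (u k 0 +i* 0).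
Proof. by rewrite mxE. Qed.
Lemma c0E : (0 : C) = (0 +i* 0). Proof. by []. Qed.
Lemma ceqE (a b c d : R) : ((a +i* b) = (c +i* d) :> C) <-> (a = c /\ b = d).
Proof. by split => [[-> ->]|[-> ->]]. Qed.
End Cplx.

Section Coll.
Variable R : realType.
Local Notation C := (R[i]).

Lemma gram3 (a0 a1 a2 b0 b1 b2 q0 q1 q2 : R) :
  a0 ^+ 2 + a1 ^+ 2 + a2 ^+ 2 != 0 ->
  b0 ^+ 2 + b1 ^+ 2 + b2 ^+ 2 = a0 ^+ 2 + a1 ^+ 2 + a2 ^+ 2 ->
  a0 * b0 + a1 * b1 + a2 * b2 = 0 ->
  let L := a0 ^+ 2 + a1 ^+ 2 + a2 ^+ 2 in
  let c0 := a1 * b2 - a2 * b1 in let c1 := a2 * b0 - a0 * b2 in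
  let c2 := a0 * b1 - a1 * b0 in
  let al := q0 * a0 + q1 * a1 + q2 * a2 in let be := q0 * b0 + q1 * b1 + q2 * b2 in
  let t := (q0 * c0 + q1 * c1 + q2 * c2) / (L * L) in
  [/\ q0 = al / L * a0 + be / L * b0 + t * c0,
      q1 = al / L * a1 + be / L * b1 + t * c1 &
      q2 = al / L * a2 + be / L * b2 + t * c2].
Proof.
move=> hL hb hab L c0 c1 c2 al be t.
have G : forall j : 'I_3, let qj := match nat_of_ord j with 0 => q0 | 1 => q1 | _ => q2 end in
  let aj := match nat_of_ord j with 0 => a0 | 1 => a1 | _ => a2 end in
  let bj := match nat_of_ord j with 0 => b0 | 1 => b1 | _ => b2 end in
  let cj := match nat_of_ord j with 0 => c0 | 1 => c1 | _ => c2 end in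
  ((a0 ^+ 2 + a1 ^+ 2 + a2 ^+ 2) * (b0 ^+ 2 + b1 ^+ 2 + b2 ^+ 2) - (a0 * b0 + a1 * b1 + a2 * b2) ^+ 2) * qj
  = ((b0 ^+ 2 + b1 ^+ 2 + b2 ^+ 2) * al - (a0 * b0 + a1 * b1 + a2 * b2) * be) * aj
  + ((a0 ^+ 2 + a1 ^+ 2 + a2 ^+ 2) * be - (a0 * b0 + a1 * b1 + a2 * b2) * al) * bj
  + (q0 * c0 + q1 * c1 + q2 * c2) * cj.
  by move=> j; case: j => [[|[|[|?]]] ?] //=; rewrite /al /be /c0 /c1 /c2; ring.
have hL' : L != 0 by [].
have key : forall qj aj bj cj, 
  (L * L - 0 ^+ 2) * qj = (L * al - 0 * be) * aj + (L * be - 0 * al) * bj + (q0 * c0 + q1 * c1 + q2 * c2) * cj ->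
  qj = al / L * aj + be / L * bj + t * cj.
  move=> qj aj bj cj H.
  have -> : qj = ((L * L - 0 ^+ 2) * qj) / (L * L) by field.
  by rewrite H /t; field.
have := G (@Ordinal 3 0 isT); have := G (@Ordinal 3 1 isT); have := G (@Ordinal 3 2 isT).
rewrite /= hb hab -/L => g2 g1 g0.
by split; apply: key.
Qed.

Lemma iso_collinear n (q : 'I_n -> 'cV[R]_3) (x : 'cV[C]_3) (r : C) :
  bil x x = 0 -> x != 0 -> (forall i, r = 2 * bil (cvec (q i)) x) -> collinear q.
Proof.
move=> hxx hx0 hr.
pose a0 := complex.Re (x 0 0); pose a1 := complex.Re (x 1 0); pose a2 := complex.Re (x 2 0).
pose b0 := complex.Im (x 0 0); pose b1 := complex.Im (x 1 0); pose b2 := complex.Im (x 2 0).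
have E0 : x 0 0 = (a0 +i* b0)%C := cE _.
have E1 : x 1 0 = (a1 +i* b1)%C := cE _.
have E2 : x 2 0 = (a2 +i* b2)%C := cE _.
have [h1 h2] : b0 ^+ 2 + b1 ^+ 2 + b2 ^+ 2 = a0 ^+ 2 + a1 ^+ 2 + a2 ^+ 2 /\
               a0 * b0 + a1 * b1 + a2 * b2 = 0.
  move: hxx; rewrite bilE E0 E1 E2 !cmulE !caddE c0E => /ceqE [e1 e2].
  by split; nra.
have hrr : forall i, complex.Re r = 2 * (q i 0 0 * a0 + q i 1 0 * a1 + q i 2 0 * a2) /\
                     complex.Im r = 2 * (q i 0 0 * b0 + q i 1 0 * b1 + q i 2 0 * b2).
  move=> i; have := hr i.
  rewrite bilE !cvecE E0 E1 E2 !cmulE {1}(cE r) => /ceqE [e1 e2].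
  by split; [rewrite e1 | rewrite e2]; ring.
have hL : a0 ^+ 2 + a1 ^+ 2 + a2 ^+ 2 != 0.
  apply/negP => /eqP hL; apply: (negP hx0).
  have s0 := sqr_ge0 a0; have s1 := sqr_ge0 a1; have s2 := sqr_ge0 a2.
  have t0 := sqr_ge0 b0; have t1 := sqr_ge0 b1; have t2 := sqr_ge0 b2.
  have z : forall u : R, u ^+ 2 = 0 -> u = 0 by move=> u /eqP; rewrite sqrf_eq0 => /eqP.
  have za0 : a0 = 0 by apply: z; lra.
  have za1 : a1 = 0 by apply: z; lra.
  have za2 : a2 = 0 by apply: z; lra.
  have zb0 : b0 = 0 by apply: z; lra.
  have zb1 : b1 = 0 by apply: z; lra.
  have zb2 : b2 = 0 by apply: z; lra.
  apply/eqP/matrixP => k j; rewrite [j]ord1 {1}(col3E x) !mxE.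
  by case: k => [[|[|[|?]]] ?] //=; rewrite ?E0 ?E1 ?E2 ?za0 ?za1 ?za2 ?zb0 ?zb1 ?zb2.
set L := a0 ^+ 2 + a1 ^+ 2 + a2 ^+ 2.
exists (col3 (complex.Re r / 2 / L * a0 + complex.Im r / 2 / L * b0)
             (complex.Re r / 2 / L * a1 + complex.Im r / 2 / L * b1)
             (complex.Re r / 2 / L * a2 + complex.Im r / 2 / L * b2)),
       (col3 (a1 * b2 - a2 * b1) (a2 * b0 - a0 * b2) (a0 * b1 - a1 * b0)).
split.
  apply/negP => /eqP hc.
  move/matrixP: hc => hc.
  have hc0 := hc (@Ordinal 3 0 isT) 0.
  have hc1 := hc (@Ordinal 3 1 isT) 0.
  have hc2 := hc (@Ordinal 3 2 isT) 0.
  rewrite /= !mxE /= in hc0 hc1 hc2.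
  have I : (a1 * b2 - a2 * b1) ^+ 2 + (a2 * b0 - a0 * b2) ^+ 2 + (a0 * b1 - a1 * b0) ^+ 2 =
     (a0 ^+ 2 + a1 ^+ 2 + a2 ^+ 2) * (b0 ^+ 2 + b1 ^+ 2 + b2 ^+ 2) - (a0 * b0 + a1 * b1 + a2 * b2) ^+ 2.
    by ring.
  rewrite h1 h2 hc0 hc1 hc2 -/L in I.
  have LL : L * L = 0.
    rewrite -[RHS](_ : (0:R) ^+ 2 + 0 ^+ 2 + 0 ^+ 2 = 0); last by ring.
    by rewrite I; ring.
  move: hL; rewrite -/L => /negP; apply.
  by move/eqP: LL; rewrite mulf_eq0 orbb.
move=> i.
case: (gram3 (q i 0 0) (q i 1 0) (q i 2 0) hL h1 h2) => g0 g1 g2.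
exists ((q i 0 0 * (a1 * b2 - a2 * b1) + q i 1 0 * (a2 * b0 - a0 * b2) + q i 2 0 * (a0 * b1 - a1 * b0)) / (L * L)).
apply/matrixP => k j; rewrite [j]ord1 {1}(col3E (q i)) !mxE.
have [e1 e2] := hrr i.
case: k => [[|[|[|?]]] ?] //=; rewrite e1 e2.
- by rewrite {1}g0 /L; field.
- by rewrite {1}g1 /L; field.
- by rewrite {1}g2 /L; field.
Qed.
End Coll.

Section Back.
Variable R : realType.
Local Notation C := (R[i]).

Lemma cross_ex (u : 'cV[R]_3) : u != 0 ->
  exists e0 e1 e2 : R, e0 * u 0 0 + e1 * u 1 0 + e2 * u 2 0 = 0 /\ 0 < e0 ^+ 2 + e1 ^+ 2 + e2 ^+ 2.
Proof.
move=> u0.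
case: (eqVneq (u 1 0 ^+ 2 + u 2 0 ^+ 2) 0) => h.
  have s1 := sqr_ge0 (u 1 0); have s2 := sqr_ge0 (u 2 0).
  have : u 1 0 ^+ 2 = 0 by lra.
  move/eqP; rewrite sqrf_eq0 => /eqP z1.
  exists 0, 1, 0; split; first by rewrite z1; ring.
  by rewrite expr0n /= expr1n add0r addr0 ltr01.
exists 0, (u 2 0), (- u 1 0); split; first by ring.
rewrite expr0n /= add0r sqrrN addrC lt0r h /=.
by rewrite addr_ge0 ?sqr_ge0.
Qed.

Lemma collinear_iso n (q : 'I_n -> 'cV[R]_3) : collinear q ->
  exists (x : 'cV[C]_3) (r : C),
    [/\ bil x x = 0, bil x (conjv x) != 0 & forall i, r = 2 * bil (cvec (q i)) x].
Proof.
case=> a [u [u0 hq]].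
have [e0 [e1 [e2 [he hee]]]] := cross_ex u0.
have uu : 0 < u 0 0 ^+ 2 + u 1 0 ^+ 2 + u 2 0 ^+ 2.
  rewrite lt0r !addr_ge0 ?sqr_ge0 ?andbT //; apply/negP => /eqP h; apply: (negP u0).
  have s0 := sqr_ge0 (u 0 0); have s1 := sqr_ge0 (u 1 0); have s2 := sqr_ge0 (u 2 0).
  have z : forall w : R, w ^+ 2 = 0 -> w = 0 by move=> w /eqP; rewrite sqrf_eq0 => /eqP.
  have z0 : u 0 0 = 0 by apply: z; lra.
  have z1 : u 1 0 = 0 by apply: z; lra.
  have z2 : u 2 0 = 0 by apply: z; lra.
  apply/eqP/matrixP => k j; rewrite [j]ord1 {1}(col3E u) !mxE.
  by case: k => [[|[|[|?]]] ?] //=.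
pose l := Num.sqrt (u 0 0 ^+ 2 + u 1 0 ^+ 2 + u 2 0 ^+ 2).
have hl : l ^+ 2 = u 0 0 ^+ 2 + u 1 0 ^+ 2 + u 2 0 ^+ 2 by rewrite sqr_sqrtr // !addr_ge0 ?sqr_ge0.
have l0 : l != 0 by apply: lt0r_neq0; rewrite sqrtr_gt0.
pose f0 := l^-1 * (u 1 0 * e2 - u 2 0 * e1).
pose f1 := l^-1 * (u 2 0 * e0 - u 0 0 * e2).
pose f2 := l^-1 * (u 0 0 * e1 - u 1 0 * e0).
have F1 : f0 ^+ 2 + f1 ^+ 2 + f2 ^+ 2 = e0 ^+ 2 + e1 ^+ 2 + e2 ^+ 2.
  have I : (u 1 0 * e2 - u 2 0 * e1) ^+ 2 + (u 2 0 * e0 - u 0 0 * e2) ^+ 2 + (u 0 0 * e1 - u 1 0 * e0) ^+ 2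
    = (u 0 0 ^+ 2 + u 1 0 ^+ 2 + u 2 0 ^+ 2) * (e0 ^+ 2 + e1 ^+ 2 + e2 ^+ 2)
      - (e0 * u 0 0 + e1 * u 1 0 + e2 * u 2 0) ^+ 2 by ring.
  rewrite he -hl in I.
  rewrite /f0 /f1 /f2.
  have -> : (l^-1 * (u 1 0 * e2 - u 2 0 * e1)) ^+ 2 + (l^-1 * (u 2 0 * e0 - u 0 0 * e2)) ^+ 2 +
     (l^-1 * (u 0 0 * e1 - u 1 0 * e0)) ^+ 2 =
     ((u 1 0 * e2 - u 2 0 * e1) ^+ 2 + (u 2 0 * e0 - u 0 0 * e2) ^+ 2 + (u 0 0 * e1 - u 1 0 * e0) ^+ 2) / l ^+ 2.
    by field.
  by rewrite I; field.
have F2 : e0 * f0 + e1 * f1 + e2 * f2 = 0 by rewrite /f0 /f1 /f2; ring.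
have F3 : u 0 0 * f0 + u 1 0 * f1 + u 2 0 * f2 = 0 by rewrite /f0 /f1 /f2; ring.
pose x : 'cV[C]_3 := col3 (e0 +i* f0)%C (e1 +i* f1)%C (e2 +i* f2)%C.
exists x, (2 * bil (cvec a) x); split.
- rewrite bilE /x !mxE /= !cmulE !caddE c0E; apply/ceqE; split.
    by move: F1; rewrite !expr2 => F1'; lra.
  by move: F2 => F2'; nra.
- rewrite bilE /x /conjv !mxE /= !cmulE !caddE; apply/negP => /eqP /ceqE [h _].
  by move: F1 hee h; rewrite !expr2 => F1' hee' h; lra.
- move=> i; have [t ->] := hq i; congr (2 * _).
  have E : forall A B T : R, A = B + T -> T = 0 -> A = B by move=> A B T -> ->; rewrite addr0.
  rewrite !bilE !cvecE /x !mxE /= !cmulE !caddE; apply/ceqE; split.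
    apply: (E _ _ (- (t * (e0 * u 0 0 + e1 * u 1 0 + e2 * u 2 0)))); first by ring.
    by rewrite he mulr0 oppr0.
  apply: (E _ _ (- (t * (u 0 0 * f0 + u 1 0 * f1 + u 2 0 * f2)))); first by ring.
  by rewrite F3 mulr0 oppr0.
Qed.
End Back.

Lemma lform_bond (R : realType) (p P : 'cV[R]_3) d (v : 'I_17 -> R[i]) : hc v = 0 -> Mc v = 0 ->
  lform p P d v = rc v - 2 * bil (cvec p) (xc v) - 2 * bil (yc v) (cvec P).
Proof. by move=> h0 hM; rewrite /lform h0 hM mul0mx bil0l; ring. Qed.

Theorem mainTheorem7 (R : realType) (n : nat)
  (p P : 'I_n -> 'cV[R]_3) (d : 'I_n -> R) (hd : forall i, 0 <= d i) :
  (exists v : 'I_17 -> R[i], collinearity_bond p P d v) <->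
  (collinear p \/ collinear P).
Proof.
split.
- case=> v [[[hX hl] [_ h0]] [_ [hM hxy]]].
  have [isoX isoY] := inX_isotropic hX; rewrite h0 mul0r in isoX isoY.
  have hl' : forall i, rc v = 2 * bil (cvec (p i)) (xc v) + 2 * bil (yc v) (cvec (P i)).
    by move=> i; have := hl i; rewrite lform_bond // => H; rewrite -[LHS]subr0 -H; ring.
  case: (eqVneq (yc v) 0) => hy.
    have hx0 : xc v != 0 by move: hxy; rewrite hy eqxx; case: (xc v == 0).
    left; apply: (iso_collinear (r := rc v) isoX hx0) => i.
    by rewrite (hl' i) hy bil0l mulr0 addr0.
  have hx : xc v = 0.
    by move: hxy; rewrite (negbTE hy) => H; apply/eqP; move: H; case: (xc v == 0).
  right; apply: (iso_collinear (r := rc v) isoY hy) => i.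
  by rewrite (hl' i) hx bilC bil0l mulr0 add0r bilC.
- case=> [hp|hP].
    have [x [r [hxx hs hr]]] := collinear_iso hp.
    have x0 : x != 0 by apply/eqP => e; move: hs; rewrite e bil0l eqxx.
    have hXv : in_X (pack 0 0 x 0 r) := inX_target r true hxx hs.
    exists (pack 0 0 x 0 r); split; split.
    + split => // i; rewrite lform_bond ?hc_pack ?Mc_pack // rc_pack xc_pack yc_pack.
      by rewrite bil0l mulr0 subr0 (hr i) subrr.
    + by split => //; exact: hc_pack.
    + by split => //; exact: hc_pack.
    + by rewrite Mc_pack xc_pack yc_pack eqxx (negbTE x0).
  have [x [r [hxx hs hr]]] := collinear_iso hP.
  have x0 : x != 0 by apply/eqP => e; move: hs; rewrite e bil0l eqxx.
  have hXv : in_X (pack 0 0 0 x r) := inX_target r false hxx hs.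
  exists (pack 0 0 0 x r); split; split.
  + split => // i; rewrite lform_bond ?hc_pack ?Mc_pack // rc_pack xc_pack yc_pack.
    by rewrite bilC bil0l mulr0 subr0 bilC (hr i) subrr.
  + by split => //; exact: hc_pack.
  + by split => //; exact: hc_pack.
  + by rewrite Mc_pack xc_pack yc_pack eqxx (negbTE x0).
Qed.
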